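(* For every share function $\rho$, the $\rho$-blame $\mathbf B^\rho$ is an unbiased importance value function.
   Context: $X$ is a fixed finite set of $n=|X|$ variables. An assignment over $U\subseteq X$ is a map $\mathbf u:U\to\{0,1\}$; $\mathbf u;\mathbf v$ is concatenation of assignments with disjoint domains, $\mathbf u_S$ is restriction. For $S\subseteq X$ and $\mathbf u$ over $X$, $\mathbf u^{\oplus S}$ flips the values of the variables in $S$. $\mathbb B(X)$ is the set of Boolean functions $\{0,1\}^X\to\{0,1\}$, combined pointwise by $\lor,\land$ (juxtaposition), $\oplus$, negation $\overline f$; a variable $x$ also denotes $\mathbf u\mapsto\mathbf u(x)$; $f\ge g$ is pointwise. Cofactor: $f_{\mathbf v}(\mathbf u)=f(\mathbf v;\mathbf u_{X\setminus V})$ for $\mathbf v$ over $V$; $f_{x/c}$ for $V=\{x\}$. $\mathrm{dep}(f)=\{x: f_{x/1}\ne f_{x/0}\}$; $f$ is monotone in $x$ if $f_{x/1}\ge f_{x/0}$. $f^{\oplus y}(\mathbf u)=f(\mathbf u^{\oplus\{y\}})$. For a permutation $\sigma$ of $X$: $(\sigma\mathbf u)(x)=\mathbf u(\sigma^{-1}(x))$, $(\sigma f)(\mathbf u)=f(\sigma^{-1}\mathbf u)$. $f[x/s]=s f_{x/1}\lor\overline s f_{x/0}$. Modularity: $f$ is modular in $g$ if $g$ is not constant and there are $\ell\in\mathbb B(X)$, $z\in X$ with $\mathrm{dep}(\ell)\cap\mathrm{dep}(g)=\emptyset$ and $f=\ell[z/g]$; monotonically modular if moreover $\ell$ is monotone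 in $z$. Then $f_{g/1}:=\ell_{z/1}$, $f_{g/0}:=\ell_{z/0}$ (well defined). A value function is a map $\mathfrak I:X\times\mathbb B(X)\to\mathbb R$, $(x,f)\mapsto\mathfrak I_x(f)$. It is an importance value function (IVF) if for all $x,y\in X$, permutations $\sigma$ of $X$ and $f,g,h\in\mathbb B(X)$: (Bound) $0\le\mathfrak I_x(f)\le1$; (Dum) $\mathfrak I_x(f)=0$ if $x\notin\mathrm{dep}(f)$; (Dic) $\mathfrak I_x(x)=\mathfrak I_x(\overline x)=1$; (Type) $\mathfrak I_x(f)=\mathfrak I_{\sigma(x)}(\sigma f)$ and $\mathfrak I_x(f)=\mathfrak I_x(f^{\oplus y})$; (ModEC) $\mathfrak I_x(f)\ge\mathfrak I_x(h)$ whenever $f$ and $h$ are monotonically modular in $g$, $f_{g/1}\ge h_{g/1}$, $h_{g/0}\ge f_{g/0}$, and $x\in\mathrm{dep}(g)$. $\mathfrak I$ is unbiased if $\mathfrak I_x(g)=\mathfrak I_x(\overline g)$ for all $x,g$. Blame: for $f\in\mathbb B(X)$, $x\in X$ and $\mathbf u$ over $X$, a critical set of $x$ in $f$ under $\mathbf u$ is a set $S\subseteq X\setminus\{x\}$ with $f(\mathbf u)=f(\mathbf u^{\oplus S})$ and $f(\mathbf u)\ne f(\mathbf u^{\oplus(S\cup\{x\})})$; $\mathrm{scs}^{\mathbf u}_x(f)$ is the minimum size of a critical set ($\infty$ if none exists). A share function is $\rho:\mathbb N\cup\{\infty\}\to\mathbb R$ that is monotonically decreasing with $\rho(\infty)=\lim_{k\to\infty}\rho(k)=0$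 and $\rho(0)=1$. The $\rho$-blame is $\mathbf B^\rho_x(f)=\mathbb E_{\mathbf u\in\{0,1\}^X}[\rho(\mathrm{scs}^{\mathbf u}_x(f))]$ (uniform distribution). *)

(* Defs.v *)
From HB Require Import structures.
From mathcomp Require Import all_boot all_order all_algebra all_fingroup.
From mathcomp Require Import all_classical all_reals all_analysis.
Set Implicit Arguments. Unset Strict Implicit. Unset Printing Implicit Defensive.
Import Order.TTheory GRing.Theory Num.Theory.
Import numFieldNormedType.Exports.
Local Open Scope ring_scope.
Local Open Scope classical_set_scope.

Section Defs.
Variable X : finType.

Definition asg := {ffun X -> bool}.
Definition bfun := {ffun asg -> bool}.

Definition flip (S : {set X}) (u : asg) : asg :=
  [ffun y => if y \in S then ~~ u y else u y].

Definition upd (u : asg) (x : X) (c : bool) : asg :=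
  [ffun y => if y == x then c else u y].

Definition cof (f : bfun) (x : X) (c : bool) : bfun := [ffun u : asg => f (upd u x c)].

Definition dep (f : bfun) : {set X} := [set x | cof f x true != cof f x false].

Definition bge (f g : bfun) : Prop := forall u, g u ==> f u.

Definition monotone_in (f : bfun) (x : X) : Prop := bge (cof f x true) (cof f x false).

Definition bvar (x : X) : bfun := [ffun u : asg => u x].
Definition bneg (f : bfun) : bfun := [ffun u : asg => ~~ f u].

Definition fflip (f : bfun) (y : X) : bfun := [ffun u : asg => f (flip [set y] u)].

Definition perm_asg (s : {perm X}) (u : asg) : asg := [ffun x => u ((s^-1)%g x)].
Definition perm_bfun (s : {perm X}) (f : bfun) : bfun :=
  [ffun u : asg => f (perm_asg (s^-1)%g u)].

Definition subst (f : bfun) (x : X) (s : bfun) : bfun :=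
  [ffun u : asg => (s u && cof f x true u) || (~~ s u && cof f x false u)].

Definition nonconstant (g : bfun) : Prop := exists u v, g u != g v.

(* (l, z) witnesses that f is monotonically modular in g; then
   f_{g/1} := l_{z/1} and f_{g/0} := l_{z/0}. *)
Definition mono_mod_witness (f g l : bfun) (z : X) : Prop :=
  [/\ nonconstant g, dep l :&: dep g = finset.set0, f = subst l z g & monotone_in l z].

Definition mono_modular (f g : bfun) : Prop := exists l z, mono_mod_witness f g l z.

Definition IVF (R : realType) (I : X -> bfun -> R) : Prop :=
  [/\ forall x f, 0 <= I x f <= 1,
      forall x f, x \notin dep f -> I x f = 0,
      forall x, I x (bvar x) = 1 /\ I x (bneg (bvar x)) = 1,
      forall x y (s : {perm X}) f,
                    I x f = I (s x) (perm_bfun s f) /\ I x f = I x (fflip f y)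
    & forall x f h g lf zf lh zh,
                    mono_mod_witness f g lf zf -> mono_mod_witness h g lh zh ->
                    bge (cof lf zf true) (cof lh zh true) ->
                    bge (cof lh zh false) (cof lf zf false) ->
                    x \in dep g -> I x h <= I x f].

Definition unbiased (R : realType) (I : X -> bfun -> R) : Prop :=
  forall x g, I x g = I x (bneg g).

(* critical sets and minimal critical set size (None = infinity) *)
Definition critical (f : bfun) (x : X) (u : asg) (S : {set X}) : bool :=
  [&& x \notin S, f u == f (flip S u) & f u != f (flip (x |: S) u)].

Definition scs (f : bfun) (x : X) (u : asg) : option nat :=
  if [exists S, critical f x u S]
  then Some (\big[minn/#|X|]_(S | critical f x u S) #|S|)
  else None.

End Defs.

Definition le_ext (a b : option nat) : bool :=
  match a, b with
  | _, None => true
  | None, Some _ => false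
  | Some k, Some l => (k <= l)%N
  end.

Definition share_function (R : realType) (rho : option nat -> R) : Prop :=
  [/\ forall a b, le_ext a b -> rho b <= rho a,
      rho None = 0,
      (fun k : nat => rho (Some k)) @ \oo --> 0%R
    & rho (Some 0%N) = 1].

Definition blame (R : realType) (X : finType) (rho : option nat -> R)
  (x : X) (f : bfun X) : R :=
  (#|{: asg X}|%:R)^-1 * \sum_(u : asg X) rho (scs f x u).

(* Main.v *)
Require Import Defs.
From HB Require Import structures.
From mathcomp Require Import all_boot all_order all_algebra all_fingroup.
From mathcomp Require Import all_classical all_reals all_analysis.
From mathcomp Require Import lra.
Set Implicit Arguments. Unset Strict Implicit. Unset Printing Implicit Defensive.
Import Order.TTheory GRing.Theory Num.Theory.

Lemma flip0 (X : finType) (u : asg X) : flip finset.set0 u = u.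
Proof. by apply/ffunP=> y; rewrite ffunE inE. Qed.

Lemma flipK (X : finType) (S : {set X}) (u : asg X) : flip S (flip S u) = u.
Proof. by apply/ffunP=> y; rewrite !ffunE; case: (y \in S); rewrite ?negbK. Qed.

Lemma flip_inj (X : finType) (S : {set X}) : injective (@flip X S).
Proof. exact: can_inj (@flipK X S). Qed.

Lemma flipC (X : finType) (S T : {set X}) (u : asg X) :
  flip S (flip T u) = flip T (flip S u).
Proof. by apply/ffunP=> y; rewrite !ffunE; case: (y \in S); case: (y \in T). Qed.

Lemma flipKC (X : finType) (S T : {set X}) (u : asg X) :
  flip T (flip S (flip T u)) = flip S u.
Proof. by rewrite flipC flipK. Qed.

Lemma flipU1 (X : finType) (x : X) (S : {set X}) (u : asg X) :
  x \notin S -> flip (x |: S) u = flip [set x] (flip S u).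
Proof.
move=> xS; apply/ffunP=> y; rewrite !ffunE !inE.
by case: (eqVneq y x) => [->|_] /=; first by rewrite (negbTE xS).
Qed.

Lemma flip1_upd (X : finType) (x : X) (v : asg X) : flip [set x] v = upd v x (~~ v x).
Proof. by apply/ffunP=> y; rewrite !ffunE inE; case: eqVneq => [->|]. Qed.

Lemma nodep_upd (X : finType) (l : bfun X) x v c c' :
  x \notin dep l -> l (upd v x c) = l (upd v x c').
Proof.
move=> xl.
have E: cof l x true = cof l x false by move: xl; rewrite inE negbK => /eqP.
have Ec b : l (upd v x b) = cof l x b v by rewrite ffunE.
by rewrite !Ec; case: c; case: c'; rewrite ?E.
Qed.

Lemma nodep_flip (X : finType) (l : bfun X) x v :
  x \notin dep l -> l (flip [set x] v) = l v.
Proof.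
move=> xl; rewrite flip1_upd.
have E : upd v x (v x) = v.
  by apply/ffunP=> y; rewrite ffunE; case: eqVneq => [->|].
by rewrite -[in RHS]E; exact: nodep_upd.
Qed.

Lemma nodep_cof (X : finType) (l : bfun X) x z c v :
  x \notin dep l -> cof l z c (flip [set x] v) = cof l z c v.
Proof.
move=> xl; rewrite !ffunE; case: (eqVneq z x) => [->|zx].
  by apply: congr1; apply/ffunP=> y; rewrite !ffunE inE; case: eqVneq.
have ->: upd (flip [set x] v) z c = flip [set x] (upd v z c).
  apply/ffunP=> y; rewrite !ffunE inE; case: (eqVneq y z) => [->|//].
  by rewrite (negbTE zx).
by rewrite nodep_flip.
Qed.

Lemma substE (X : finType) (l : bfun X) z s u :
  subst l z s u = (s u && cof l z true u) || (~~ s u && cof l z false u).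
Proof. by rewrite ffunE. Qed.

Lemma bigmin_le_seq (I : eqType) (s : seq I) (F : I -> nat) d j :
  j \in s -> (\big[minn/d]_(i <- s) F i <= F j)%N.
Proof.
elim: s => //= a s IH; rewrite inE big_cons => /orP [/eqP->|js].
  exact: geq_minl.
exact: leq_trans (geq_minr _ _) (IH js).
Qed.

Lemma bigmin_le (I : finType) (P : pred I) (F : I -> nat) d j :
  P j -> (\big[minn/d]_(i | P i) F i <= F j)%N.
Proof.
move=> Pj; rewrite -big_filter; apply: bigmin_le_seq.
by rewrite mem_filter Pj mem_index_enum.
Qed.

Lemma scs_le (X : finType) (f h : bfun X) x x' u u' :
  (forall S, critical h x u S -> exists2 T, critical f x' u' T & (#|T| <= #|S|)%N) ->
  le_ext (scs f x' u') (scs h x u).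
Proof.
move=> H; rewrite /scs.
case: (boolP [exists S, critical h x u S]) => hex; last first.
  by case: (boolP [exists S, critical f x' u' S]).
have [S0 cS0] := existsP hex.
have [T0 cT0 _] := H _ cS0.
have -> : [exists S, critical f x' u' S] by apply/existsP; exists T0.
rewrite /=.
set m := \big[minn/#|X|]_(T | critical f x' u' T) #|T|.
have mle : forall T, critical f x' u' T -> (m <= #|T|)%N.
  by move=> T cT; exact: bigmin_le.
apply: (big_ind (fun y => m <= y)%N).
- by apply: leq_trans (mle _ cT0) (max_card _).
- by move=> a b; rewrite leq_min => -> ->.
- by move=> S cS; have [T cT le] := H S cS; exact: leq_trans (mle T cT) le.
Qed.

Lemma le_ext_anti a b : le_ext a b -> le_ext b a -> a = b.
Proof.
by case: a b => [a|] [b|] //= ab ba; congr Some; apply/eqP; rewrite eqn_leq ab ba.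
Qed.

Lemma scs_pivot (X : finType) (f : bfun X) x u :
  f u != f (flip [set x] u) -> scs f x u = Some 0%N.
Proof.
move=> ne; have c0 : critical f x u finset.set0.
  by rewrite /critical inE flip0 eqxx finset.setU0 ne.
rewrite /scs (_ : [exists S, _] = true); last by apply/existsP; exists finset.set0.
congr Some; apply/eqP; rewrite -leqn0 -(cards0 X); exact: bigmin_le.
Qed.

Lemma nodep_of (X : finType) (l g : bfun X) x :
  dep l :&: dep g = finset.set0 -> x \in dep g -> x \notin dep l.
Proof.
move=> d xg; apply/negP=> xl.
have : x \in dep l :&: dep g by rewrite inE xl.
by rewrite d inE.
Qed.

Lemma keyK (X : finType) (f h g lf lh : bfun X) zf zh x u S :
  mono_mod_witness f g lf zf -> mono_mod_witness h g lh zh ->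
  bge (cof lf zf true) (cof lh zh true) -> bge (cof lh zh false) (cof lf zf false) ->
  x \in dep g -> critical h x u S ->
  f (flip S u) = h (flip S u) /\ f (flip S u) != f (flip (x |: S) u).
Proof.
case=> _ dlf -> mf; case=> _ dlh -> mh b1 b0 xg /and3P [xS /eqP huv hne].
rewrite huv in hne.
have xlf := nodep_of dlf xg; have xlh := nodep_of dlh xg.
rewrite (flipU1 _ xS) in hne *.
move: hne; set v := flip S u.
rewrite !substE !(nodep_cof _ _ _ xlf) !(nodep_cof _ _ _ xlh).
move: (b1 v) (b0 v) (mf v) (mh v).
case: (g v); case: (g (flip [set x] v)); case: (cof lf zf true v);
  case: (cof lf zf false v); case: (cof lh zh true v); case: (cof lh zh false v) => //.
Qed.

Local Open Scope ring_scope.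

Lemma rho_mono (R : realType) (rho : option nat -> R) a b :
  share_function rho -> le_ext a b -> rho b <= rho a.
Proof. by case=> H _ _ _; apply: H. Qed.

Lemma rho_ge0 (R : realType) (rho : option nat -> R) a :
  share_function rho -> 0 <= rho a.
Proof.
move=> sh; have [_ e _ _] := sh; rewrite -e; apply: rho_mono => //; by case: a.
Qed.

Lemma rho_le1 (R : realType) (rho : option nat -> R) a :
  share_function rho -> rho a <= 1.
Proof.
move=> sh; have [_ _ _ e] := sh; rewrite -e; apply: rho_mono => //; by case: a.
Qed.

Lemma modL2 (R : realType) (rho : option nat -> R) (X : finType) (f h g lf lh : bfun X) zf zh x u :
  share_function rho ->
  mono_mod_witness f g lf zf -> mono_mod_witness h g lh zh ->
  bge (cof lf zf true) (cof lh zh true) -> bge (cof lh zh false) (cof lf zf false) ->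
  x \in dep g -> f u = h u -> rho (scs h x u) <= rho (scs f x u).
Proof.
move=> sh wf wh b1 b0 xg fh; apply: rho_mono => //; apply: scs_le => S cS.
exists S => //.
have [e ne] := keyK wf wh b1 b0 xg cS.
move: (cS) => /and3P [xS /eqP huv _].
by rewrite /critical xS fh huv -e eqxx ne.
Qed.

Lemma modL1 (R : realType) (rho : option nat -> R) (X : finType) (f h g lf lh : bfun X) zf zh x u :
  share_function rho ->
  mono_mod_witness f g lf zf -> mono_mod_witness h g lh zh ->
  bge (cof lf zf true) (cof lh zh true) -> bge (cof lh zh false) (cof lf zf false) ->
  x \in dep g -> f u = f (flip [set x] u) -> f u != h u ->
  rho (scs h x u) <= rho (scs f x (flip [set x] u)).
Proof.
move=> sh wf wh b1 b0 xg ff fh; apply: rho_mono => //; apply: scs_le => S cS.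
exists S => //.
have [e ne] := keyK wf wh b1 b0 xg cS.
move: (cS) => /and3P [xS /eqP huv _].
rewrite /critical xS /= -ff (flipU1 _ xS) flipKC flipC -(flipU1 _ xS).
move: ne fh; rewrite e -huv.
by case: (f u); case: (h u); case: (f (flip (x |: S) u)).
Qed.

Lemma modPair (R : realType) (rho : option nat -> R) (X : finType) (f h g lf lh : bfun X) zf zh x u :
  share_function rho ->
  mono_mod_witness f g lf zf -> mono_mod_witness h g lh zh ->
  bge (cof lf zf true) (cof lh zh true) -> bge (cof lh zh false) (cof lf zf false) ->
  x \in dep g ->
  rho (scs h x u) + rho (scs h x (flip [set x] u)) <=
  rho (scs f x u) + rho (scs f x (flip [set x] u)).
Proof.
move=> sh wf wh b1 b0 xg.
have := rho_le1 (scs h x u) sh; have := rho_le1 (scs h x (flip [set x] u)) sh.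
case: (eqVneq (f u) (f (flip [set x] u))) => ff; last first.
  rewrite (scs_pivot ff) (@scs_pivot _ f x (flip [set x] u)); last by rewrite flipK eq_sym.
  have [_ _ _ ->] := sh; move=> *; lra.
case: (eqVneq (h u) (h (flip [set x] u))) => hh; last first.
  have c0 : critical h x u finset.set0.
    by rewrite /critical inE flip0 eqxx finset.setU0 hh.
  have [_] := keyK wf wh b1 b0 xg c0.
  by rewrite flip0 finset.setU0 ff eqxx.
case: (eqVneq (f u) (h u)) => fh.
  move=> _ _; apply: lerD; first exact: (modL2 sh wf wh).
  by apply: (modL2 sh wf wh) => //; rewrite -ff -hh.
move=> _ _; rewrite [in X in _ <= X]addrC; apply: lerD.
  by apply: (modL1 sh wf wh).
have := modL1 (u := flip [set x] u) sh wf wh b1 b0 xg; rewrite flipK; apply.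
  by [].
by rewrite -ff -hh.
Qed.

Lemma modSum (R : realType) (rho : option nat -> R) (X : finType) (f h g lf lh : bfun X) zf zh x :
  share_function rho ->
  mono_mod_witness f g lf zf -> mono_mod_witness h g lh zh ->
  bge (cof lf zf true) (cof lh zh true) -> bge (cof lh zh false) (cof lf zf false) ->
  x \in dep g ->
  \sum_(u : asg X) rho (scs h x u) <= \sum_(u : asg X) rho (scs f x u).
Proof.
move=> sh wf wh b1 b0 xg.
have e : forall F : asg X -> R, \sum_(u : asg X) F (flip [set x] u) = \sum_(u : asg X) F u.
  by move=> F; rewrite [RHS](reindex_inj (@flip_inj X [set x])).
have : \sum_(u : asg X) (rho (scs h x u) + rho (scs h x (flip [set x] u))) <=
  \sum_(u : asg X) (rho (scs f x u) + rho (scs f x (flip [set x] u))).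
  by apply: ler_sum => u _; exact: modPair sh wf wh b1 b0 xg.
rewrite !big_split /= (e (fun u => rho (scs h x u))) (e (fun u => rho (scs f x u))).
move=> H; lra.
Qed.

Lemma scs_eq (X : finType) (f h : bfun X) x x' u u' :
  (forall S, critical h x u S -> exists2 T, critical f x' u' T & (#|T| <= #|S|)%N) ->
  (forall S, critical f x' u' S -> exists2 T, critical h x u T & (#|T| <= #|S|)%N) ->
  scs f x' u' = scs h x u.
Proof. by move=> H1 H2; apply: le_ext_anti; apply: scs_le. Qed.

Lemma scs_same (X : finType) (f h : bfun X) x x' u u' :
  (forall S, critical h x u S = critical f x' u' S) -> scs f x' u' = scs h x u.
Proof.
by move=> H; apply: scs_eq => S cS; exists S; rewrite ?H // -H.
Qed.

Lemma perm_asgK (X : finType) (s : {perm X}) (u : asg X) :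
  perm_asg (s^-1)%g (perm_asg s u) = u.
Proof. by apply/ffunP=> y; rewrite !ffunE invgK permK. Qed.

Lemma perm_asg_inj (X : finType) (s : {perm X}) : injective (perm_asg s).
Proof. exact: can_inj (@perm_asgK X s). Qed.

Lemma flip_perm (X : finType) (s : {perm X}) S (u : asg X) :
  perm_asg (s^-1)%g (flip S (perm_asg s u)) = flip (s @^-1: S) u.
Proof. by apply/ffunP=> y; rewrite !ffunE invgK permK inE. Qed.

Lemma crit_perm (X : finType) (s : {perm X}) (f : bfun X) x u S :
  critical (perm_bfun s f) (s x) (perm_asg s u) S = critical f x u (s @^-1: S).
Proof.
rewrite /critical !ffunE perm_asgK !flip_perm.
have -> : s @^-1: (s x |: S) = x |: s @^-1: S.
  by apply/setP=> y; rewrite !inE (inj_eq perm_inj).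
by rewrite inE.
Qed.

Lemma scs_perm (X : finType) (s : {perm X}) (f : bfun X) x u :
  scs (perm_bfun s f) (s x) (perm_asg s u) = scs f x u.
Proof.
apply: scs_eq => S cS.
  exists ((s^-1)%g @^-1: S).
    rewrite crit_perm; congr critical: cS; apply/setP=> y; rewrite !inE permK //.
  by rewrite card_preimset //; exact: perm_inj.
exists (s @^-1: S); first by rewrite -crit_perm.
by rewrite card_preimset //; exact: perm_inj.
Qed.

Lemma scs_fflip (X : finType) (f : bfun X) x y u :
  scs (fflip f y) x (flip [set y] u) = scs f x u.
Proof.
apply: scs_same => S.
by rewrite /critical !ffunE flipK !flipKC.
Qed.

Lemma scs_bneg (X : finType) (g : bfun X) x u :
  scs (bneg g) x u = scs g x u.
Proof.
apply: scs_same => S; rewrite /critical !ffunE.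
by case: (g u); case: (g (flip S u)); case: (g (flip (x |: S) u)).
Qed.

Lemma card_asg_neq0 (R : realType) (X : finType) : (#|{: asg X}|%:R : R) != 0.
Proof.
rewrite pnatr_eq0 -lt0n; apply/card_gt0P; by exists [ffun=> true].
Qed.

Lemma avg_const (R : realType) (X : finType) (c : R) :
  (#|{: asg X}|%:R)^-1 * \sum_(u : asg X) c = c.
Proof.
rewrite sumr_const -[c *+ _]mulr_natl mulrA (_ : #|xpredT| = #|asg X|) // mulVf ?mul1r //; exact: card_asg_neq0.
Qed.

Lemma scs_nodep (X : finType) (f : bfun X) x u :
  x \notin dep f -> scs f x u = None.
Proof.
move=> xf; rewrite /scs (_ : [exists S, _] = false) //.
apply/existsP => -[S /and3P [xS /eqP e ne]].
by rewrite (flipU1 _ xS) nodep_flip // -e eqxx in ne.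
Qed.

Theorem mainTheorem3 (R : realType) (X : finType) (rho : option nat -> R) :
  share_function rho -> IVF (@blame R X rho) /\ unbiased (@blame R X rho).
Proof.
move=> sh; have [_ rN _ r0] := sh; split; last first.
  by move=> x g; rewrite /blame; congr (_ * _); apply: eq_bigr => u _; rewrite scs_bneg.
split.
- move=> x f; apply/andP; split.
    apply: mulr_ge0; first by rewrite invr_ge0 ler0n.
    by apply: sumr_ge0 => u _; exact: rho_ge0.
  rewrite -[leRHS](@avg_const R X 1); apply: ler_wpM2l; first by rewrite invr_ge0 ler0n.
  by apply: ler_sum => u _; exact: rho_le1.
- move=> x f xf; rewrite /blame (eq_bigr (fun=> 0)); first by rewrite big1 ?mulr0.
  by move=> u _; rewrite scs_nodep.
- move=> x; split; rewrite /blame (eq_bigr (fun=> 1)) ?avg_const // => u _;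
    rewrite scs_pivot ?r0 // !ffunE inE eqxx; by case: (u x).
- move=> x y s f; split.
    rewrite /blame [in RHS](reindex_inj (@perm_asg_inj X s)).
    by congr (_ * _); apply: eq_bigr => u _; rewrite scs_perm.
  rewrite /blame [in RHS](reindex_inj (@flip_inj X [set y])).
  by congr (_ * _); apply: eq_bigr => u _; rewrite scs_fflip.
- move=> x f h g lf zf lh zh wf wh b1 b0 xg.
  rewrite /blame; apply: ler_wpM2l; first by rewrite invr_ge0 ler0n.
  exact: modSum sh wf wh b1 b0 xg.
Qed.
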